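(* Let $F_*$ be the category of finite sets, with the injective maps as cofibrations and the bijections as weak equivalences. Then $F_*$ is a pre-cylinder category, and it is the free pre-cylinder category on one object $*$ (the singleton): for every pre-cylinder category $\mathcal D$, evaluation at the singleton gives an equivalence, natural in $\mathcal D$, between the category of morphisms of pre-cylinder categories $F_*\to\mathcal D$ (with natural transformations) and $\mathcal D$; the morphism corresponding to $X\in\mathcal D$ sends a finite set $S$ to the coproduct $\coprod_{s\in S}X$.
   Context: A cofibration category is a category with a class of maps called cofibrations such that isomorphisms are cofibrations, cofibrations are closed under composition, there is an initial object $0$ with every $0\to X$ a cofibration, and pushouts of cofibrations along arbitrary maps exist and are cofibrations. A pre-cylinder category is a cofibration category with an additional class of maps, the weak equivalences, containing isomorphisms, closed under composition, satisfying 2-out-of-6 (if $f,g,h$ composable with $f\circ g$ and $g\circ h$ weak equivalences then $f,g,h,f\circ g\circ h$ are) and the cube lemma: given a natural transformation between spans $B\leftarrow A\rightarrow C$ and $B'\leftarrow A'\rightarrow C'$ whose left legs $A\hookrightarrow B$, $A'\hookrightarrow B'$ are cofibrations and whose three components are weak equivalences, the induced map $B\sqcup_AC\to B'\sqcup_{A'}C'$ is a weak equivalence. A morphism of pre-cylinder categories is a functor preserving cofibrations, weak equivalences, the initial object and pushouts along cofibrations. *)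

(* Defs.v *)
From mathcomp Require Import all_boot.

Set Implicit Arguments.
Unset Strict Implicit.
Unset Printing Implicit Defensive.

Record Category := {
  Ob :> Type;
  Hom : Ob -> Ob -> Type;
  idm : forall a, Hom a a;
  compm : forall a b c, Hom b c -> Hom a b -> Hom a c;
  comp_id_l : forall a b (f : Hom a b), compm (idm b) f = f;
  comp_id_r : forall a b (f : Hom a b), compm f (idm a) = f;
  comp_assoc : forall a b c d (f : Hom a b) (g : Hom b c) (h : Hom c d),
      compm h (compm g f) = compm (compm h g) f
}.

Arguments Hom {C} a b : rename.
Arguments idm {C} a : rename.
Arguments compm {C a b c} g f : rename.

Definition MorClass (C : Category) := forall a b : C, Hom a b -> Prop.

Definition is_iso (C : Category) (a b : C) (f : Hom a b) : Prop :=
  exists g : Hom b a, compm g f = idm a /\ compm f g = idm b.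

Definition is_initial (C : Category) (z : C) : Prop :=
  forall x : C, exists f : Hom z x, forall g : Hom z x, g = f.

Definition is_pushout (C : Category) (A B C' P : C)
    (f : Hom A B) (g : Hom A C') (i : Hom B P) (j : Hom C' P) : Prop :=
  compm i f = compm j g /\
  forall (Q : C) (u : Hom B Q) (v : Hom C' Q), compm u f = compm v g ->
    exists h : Hom P Q,
      (compm h i = u /\ compm h j = v) /\
      forall h' : Hom P Q, compm h' i = u -> compm h' j = v -> h' = h.

Definition is_coproduct (C : Category) (I : Type) (X : I -> C) (P : C)
    (inj : forall i, Hom (X i) P) : Prop :=
  forall (Q : C) (u : forall i, Hom (X i) Q),
    exists h : Hom P Q,
      (forall i, compm h (inj i) = u i) /\
      forall h' : Hom P Q, (forall i, compm h' (inj i) = u i) -> h' = h.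

Definition is_cofibration_category (C : Category) (cof : MorClass C) : Prop :=
  (forall (a b : C) (f : Hom a b), is_iso f -> cof a b f) /\
  (forall (a b c : C) (f : Hom a b) (g : Hom b c),
      cof a b f -> cof b c g -> cof a c (compm g f)) /\
  (exists z : C, is_initial z /\ forall (x : C) (f : Hom z x), cof z x f) /\
  (forall (A B C' : C) (f : Hom A B) (g : Hom A C'), cof A B f ->
      exists (P : C) (i : Hom B P) (j : Hom C' P), is_pushout f g i j) /\
  (forall (A B C' P : C) (f : Hom A B) (g : Hom A C') (i : Hom B P) (j : Hom C' P),
      cof A B f -> is_pushout f g i j -> cof C' P j).

Definition two_out_of_six (C : Category) (weq : MorClass C) : Prop :=
  forall (A B C' D : C) (h : Hom A B) (g : Hom B C') (f : Hom C' D),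
    weq B D (compm f g) -> weq A C' (compm g h) ->
    weq C' D f /\ weq B C' g /\ weq A B h /\ weq A D (compm f (compm g h)).

Definition cube_lemma (C : Category) (cof weq : MorClass C) : Prop :=
  forall (A B C' A' B' C'' : C)
         (f : Hom A B) (g : Hom A C') (f' : Hom A' B') (g' : Hom A' C'')
         (a : Hom A A') (b : Hom B B') (c : Hom C' C''),
    cof A B f -> cof A' B' f' ->
    compm b f = compm f' a -> compm c g = compm g' a ->
    weq A A' a -> weq B B' b -> weq C' C'' c ->
    forall (P P' : C) (i : Hom B P) (j : Hom C' P) (i' : Hom B' P') (j' : Hom C'' P'),
      is_pushout f g i j -> is_pushout f' g' i' j' ->
      forall h : Hom P P', compm h i = compm i' b -> compm h j = compm j' c ->
        weq P P' h.

Definition is_precylinder_category (C : Category) (cof weq : MorClass C) : Prop :=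
  is_cofibration_category cof /\
  (forall (a b : C) (f : Hom a b), is_iso f -> weq a b f) /\
  (forall (a b c : C) (f : Hom a b) (g : Hom b c),
      weq a b f -> weq b c g -> weq a c (compm g f)) /\
  two_out_of_six weq /\
  cube_lemma cof weq.

Record PreCylCat := {
  pc_cat :> Category;
  pc_cof : MorClass pc_cat;
  pc_weq : MorClass pc_cat;
  pc_axioms : is_precylinder_category pc_cof pc_weq
}.

Record Functor (C D : Category) := {
  fobj :> C -> D;
  fmap : forall a b : C, Hom a b -> Hom (fobj a) (fobj b);
  fmap_id : forall a, fmap (idm a) = idm (fobj a);
  fmap_comp : forall a b c (f : Hom a b) (g : Hom b c),
      fmap (compm g f) = compm (fmap g) (fmap f)
}.
Arguments fmap {C D} F {a b} f : rename.

Definition is_precyl_morphism (C : Category) (cofC weqC : MorClass C)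
    (D : Category) (cofD weqD : MorClass D) (F : Functor C D) : Prop :=
  (forall (a b : C) (f : Hom a b), cofC a b f -> cofD (F a) (F b) (fmap F f)) /\
  (forall (a b : C) (f : Hom a b), weqC a b f -> weqD (F a) (F b) (fmap F f)) /\
  (forall z : C, is_initial z -> is_initial (F z)) /\
  (forall (A B C' P : C) (f : Hom A B) (g : Hom A C') (i : Hom B P) (j : Hom C' P),
      cofC A B f -> is_pushout f g i j ->
      is_pushout (fmap F f) (fmap F g) (fmap F i) (fmap F j)).

Definition is_natural (C D : Category) (F G : Functor C D)
    (eta : forall a : C, Hom (F a) (G a)) : Prop :=
  forall (a b : C) (f : Hom a b), compm (eta b) (fmap F f) = compm (fmap G f) (eta a).

Definition FinSets : Category.
Proof.
refine (@Build_Category finType (fun A B : finType => A -> B)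
          (fun A => fun x => x) (fun A B C g f => fun x => g (f x)) _ _ _);
  by [].
Defined.

Definition FinSet_cof : MorClass FinSets := fun A B (f : A -> B) => injective f.
Definition FinSet_weq : MorClass FinSets := fun A B (f : A -> B) => bijective f.

Definition star : FinSets := unit : finType.
Definition pt (S : FinSets) (s : S) : Hom star S := fun _ : unit => s.

Arguments pc_cof : clear implicits.
Arguments pc_weq : clear implicits.

Definition is_FinSet_morphism (D : PreCylCat) (F : Functor FinSets D) : Prop :=
  @is_precyl_morphism FinSets FinSet_cof FinSet_weq D (pc_cof D) (pc_weq D) F.

Definition elts (S : FinSets) : Type := Finite.sort S.

(* Main.v *)
Require Import Defs.
From mathcomp Require Import all_boot.
From Stdlib Require Import ClassicalEpsilon FunctionalExtensionality.
Set Implicit Arguments.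
Unset Strict Implicit.
Unset Printing Implicit Defensive.

Section Gen.
Variable C : Category.

Definition copmap (I : Type) (X : I -> C) (P : C) inj
  (H : @is_coproduct C I X P inj) (Q : C) (u : forall i, Hom (X i) Q) : Hom P Q :=
  proj1_sig (constructive_indefinite_description _ (H Q u)).

Lemma copmap_spec I X P inj (H : @is_coproduct C I X P inj) (Q : C) (u : forall i, Hom (X i) Q) :
  forall i, compm (copmap H u) (inj i) = u i.
Proof.
rewrite /copmap; case: (constructive_indefinite_description _ _) => h [Hh _] /=; exact Hh.
Qed.

Lemma coprod_ext I X P inj (H : @is_coproduct C I X P inj) (Q : C) (h1 h2 : Hom P Q) :
  (forall i, compm h1 (inj i) = compm h2 (inj i)) -> h1 = h2.
Proof.
move=> E; have [h [_ U]] := H Q (fun i => compm h2 (inj i)).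
by rewrite (U h1 E) (U h2 (fun _ => erefl)).
Qed.

Lemma init_uniq (z : C) : is_initial z -> forall Y (k1 k2 : Hom z Y), k1 = k2.
Proof. by move=> Hz Y k1 k2; have [k Hk] := Hz Y; rewrite (Hk k1) (Hk k2). Qed.

Lemma coprod_step (X : C) (I J : Type) (s0 : I) (emb : J -> I) (Cc : C)
  (inj' : J -> Hom X Cc) (z P : C) (f : Hom z X) (g : Hom z Cc) (i : Hom X P)
  (j : Hom Cc P) (inj : I -> Hom X P) :
  is_initial z -> @is_coproduct C J (fun _ : J => X) Cc inj' -> is_pushout f g i j ->
  inj s0 = i -> (forall t, inj (emb t) = compm j (inj' t)) ->
  (forall s, s = s0 \/ exists t, s = emb t) ->
  @is_coproduct C I (fun _ : I => X) P inj.
Proof.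
move=> Hz Hc [Hcom Hpo] E0 Ee Hcov Q u.
have Hv := copmap_spec Hc (fun t => u (emb t)).
have [h [[Hh1 Hh2] Hu]] := Hpo Q (u s0) (copmap Hc (fun t => u (emb t)))
   (init_uniq Hz _ _).
exists h; split.
- move=> s; case: (Hcov s) => [->|[t ->]]; first by rewrite E0.
  by rewrite Ee comp_assoc Hh2 Hv.
- move=> h' Hh'; apply: Hu; first by rewrite -E0 Hh'.
  apply: (coprod_ext Hc) => t; by rewrite -comp_assoc -Ee Hh' Hv.
Qed.

Lemma coprod_empty I X (z : C) inj : (I -> False) -> is_initial z -> @is_coproduct C I X z inj.
Proof.
move=> He Hz Q u; have [k Hk] := Hz Q; exists k; split.
  by move=> i; case: (He i).
by move=> h' _; apply: Hk.
Qed.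

Lemma coprod_eq I X P inj inj' : (forall i, inj i = inj' i) ->
  @is_coproduct C I X P inj -> @is_coproduct C I X P inj'.
Proof.
by move=> E; have -> : inj = inj' by apply: functional_extensionality_dep.
Qed.

End Gen.
Definition decb (b : bool) : {b} + {~~ b} :=
  if b as c return {c} + {~~ c} then left isT else right isT.

Lemma FS_eq (A B : FinSets) (f g : Hom A B) : (forall x, f x = g x) -> f = g.
Proof. exact: functional_extensionality. Qed.

Section FSpo.
Variables (A B C' : FinSets) (f : Hom A B) (g : Hom A C').
Hypothesis finj : injective f.

Definition Bc : finType := {b : B | b \notin codom f}.
Definition P0 : FinSets := ((C' + Bc)%type : finType).
Definition i0 : Hom B P0 := fun b =>
  match decb (b \in codom f) with
  | left H => inl (g (iinv H))
  | right H => inr (exist _ b H) end.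
Definition j0 : Hom C' P0 := inl.

Lemma i0_f a : i0 (f a) = inl (g a).
Proof.
rewrite /i0; destruct (decb _) as [H|H]; first by rewrite (iinv_f finj).
by have := H; rewrite codom_f.
Qed.

Lemma i0_out b (H : b \notin codom f) : i0 b = inr (exist _ b H).
Proof.
rewrite /i0; destruct (decb _) as [H'|H']; first by have := H; rewrite H'.
by congr inr; apply: val_inj.
Qed.

Lemma FS_po0 : is_pushout f g i0 j0.
Proof.
split; first by apply: FS_eq => a /=; rewrite i0_f.
move=> Q u v E.
have E' : forall a, u (f a) = v (g a) by move=> a; exact: (congr1 (fun k => k a) E).
exists (fun p => match p with inl c => v c | inr b => u (val b) end : Q); split.
  split; apply: FS_eq => /= x //.
  rewrite /i0; destruct (decb _) as [H|H] =>//=; by rewrite -E' f_iinv.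
move=> h' H1 H2; apply: FS_eq => -[c|[b Hb]] /=.
  by rewrite -H2.
by rewrite -H1 /= i0_out.
Qed.

Variables (P : FinSets) (i : Hom B P) (j : Hom C' P).
Hypothesis Hpo : is_pushout f g i j.

Lemma po_cmp : exists h : Hom P P0, (forall b, h (i b) = i0 b) /\ (forall c, h (j c) = inl c).
Proof.
have [_ U] := Hpo.
have [h [[H1 H2] _]] := U P0 i0 j0 (proj1 FS_po0).
exists h; split => x.
  exact: (congr1 (fun k => k x) H1).
exact: (congr1 (fun k => k x) H2).
Qed.

Lemma po_jinj : injective j.
Proof.
have [h [_ Hh]] := po_cmp => c1 c2 E.
by have := congr1 h E; rewrite !Hh => -[].
Qed.

Lemma po_K2 b c : i b = j c -> exists a, b = f a /\ c = g a.
Proof.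
have [h [Hi Hj]] := po_cmp => E.
have := congr1 h E; rewrite Hi Hj /i0.
destruct (decb _) as [H|H] => //= -[<-].
by exists (iinv H); rewrite f_iinv.
Qed.

Lemma po_K1 b1 b2 : i b1 = i b2 ->
  b1 = b2 \/ exists a1 a2, b1 = f a1 /\ b2 = f a2 /\ g a1 = g a2.
Proof.
have [h [Hi Hj]] := po_cmp => E.
have := congr1 h E; rewrite !Hi /i0.
destruct (decb (b1 \in codom f)) as [H1|H1]; destruct (decb (b2 \in codom f)) as [H2|H2] => //=.
  move=> [E']; right; exists (iinv H1), (iinv H2); by rewrite !f_iinv.
by move=> [E']; left.
Qed.

Lemma po_JS p : (exists b, i b = p) \/ (exists c, j c = p).
Proof.
have [_ U] := Hpo.
pose h2 : Hom P (bool : finType) := fun p => [exists b, i b == p] || [exists c, j c == p].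
have [h [_ Hu]] := U (bool : finType) (fun _ => true) (fun _ => true) erefl.
have E1 := Hu (fun _ => true) erefl erefl.
have E2 : h2 = h.
  apply: Hu; apply: FS_eq => x /=; rewrite /h2.
    by apply/orP; left; apply/existsP; exists x.
  by apply/orP; right; apply/existsP; exists x.
have := congr1 (fun k => k p) (etrans E2 (esym E1)); rewrite /h2 /=.
case/orP => /existsP [x /eqP Hx]; [left|right]; by exists x.
Qed.
End FSpo.

Lemma ap (A B : FinSets) (f g : Hom A B) : f = g -> forall x, f x = g x.
Proof. by move=> ->. Qed.

Lemma two6 (A B C D : Type) (h : A -> B) (g : B -> C) (f : C -> D) :
  bijective (fun x => f (g x)) -> bijective (fun x => g (h x)) ->
  bijective f /\ bijective g /\ bijective h /\ bijective (fun x => f (g (h x))).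
Proof.
move=> [k1 Hk1 Hk1'] [k2 Hk2 Hk2'].
have gi : injective g by move=> x y /(congr1 f) /(can_inj Hk1).
pose r := fun y => h (k2 y).
have gr : cancel r g by move=> y; rewrite /r Hk2'.
have rg : cancel g r by move=> x; apply: gi; rewrite gr.
have bg : bijective g by exists r.
have bf : bijective f.
  exists (fun z => g (k1 z)) => x //.
  by rewrite -{1}(gr x) Hk1 gr.
have bh : bijective h.
  by exists (fun y => k2 (g y)) => x //; rewrite -/(r (g x)) rg.
by do ![split => //]; exact: (bij_comp bf (bij_comp bg bh)).
Qed.

Lemma void_init : is_initial (C:=FinSets) (void : finType).
Proof.
move=> x; exists (fun v : void => match v with end) => g.
by apply: FS_eq => -[].
Qed.

Lemma FS_cube : cube_lemma FinSet_cof FinSet_weq.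
Proof.
move=> A B C' A' B' C'' f g f' g' a b c _ _ Eb Ec [a' Ha1 Ha2] [b' Hb1 Hb2]
  [c' Hc1 Hc2] P P' i j i' j' [Hcom U] [Hcom' U'] h Hi Hj.
have Eb' : forall x, b' (f' x) = f (a' x).
  by move=> x; have := ap Eb (a' x); rewrite /= Ha2 => <-; rewrite Hb1.
have Ec' : forall x, c' (g' x) = g (a' x).
  by move=> x; have := ap Ec (a' x); rewrite /= Ha2 => <-; rewrite Hc1.
have cmp : compm (C:=FinSets) (fun y => i (b' y)) f' = compm (C:=FinSets) (fun z => j (c' z)) g'.
  by apply: FS_eq => x /=; rewrite Eb' Ec'; exact: (ap Hcom (a' x)).
have [k [[Ki Kj] _]] := U' P _ _ cmp.
exists k => x.
  have [m [_ Um]] := U P i j Hcom.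
  have E1 : compm (C:=FinSets) k h = m.
    apply: Um; apply: FS_eq => y /=.
      by have /= -> := ap Hi y; have /= -> := ap Ki (b y); rewrite Hb1.
    by have /= -> := ap Hj y; have /= -> := ap Kj (c y); rewrite Hc1.
  have E2 : idm (C:=FinSets) P = m by apply: Um; apply: FS_eq.
  exact: (ap (etrans E1 (esym E2)) x).
have [m [_ Um]] := U' P' i' j' Hcom'.
have E1 : compm (C:=FinSets) h k = m.
  apply: Um; apply: FS_eq => y /=.
    by have /= -> := ap Ki y; have /= -> := ap Hi (b' y); rewrite Hb2.
  by have /= -> := ap Kj y; have /= -> := ap Hj (c' y); rewrite Hc2.
have E2 : idm (C:=FinSets) P' = m by apply: Um; apply: FS_eq.
exact: (ap (etrans E1 (esym E2)) x).
Qed.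

Lemma FS_precyl : is_precylinder_category FinSet_cof FinSet_weq.
Proof.
split; last split; last split; last split.
- split; last split; last split; last split.
  + move=> a b f [g [H1 _]]; apply: (can_inj (g:=g)) => x; exact: (ap H1 x).
  + by move=> a b c f g Hf Hg x y /Hg /Hf.
  + exists (void : finType); split; first exact: void_init.
    by move=> x f [].
  + move=> A B C' f g Hf; exists (@P0 A B C' f), (@i0 A B C' f g), (@j0 A B C' f); exact: FS_po0.
  + move=> A B C' P f g i j Hf Hp; exact: po_jinj Hp.
- move=> a b f [g [H1 H2]]; exists g => x; [exact: (ap H1 x)|exact: (ap H2 x)].
- move=> a b c f g Hf Hg; exact: (bij_comp Hg Hf).
- move=> A B C' D h g f H1 H2; exact: two6.
- exact: FS_cube.
Qed.

Definition vmap (X : FinSets) : Hom (C:=FinSets) (void : finType) X := fun v => match v with end.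

Lemma vmap_inj (X : FinSets) : FinSet_cof (vmap X).
Proof. by case. Qed.

Definition Sm (S : FinSets) (s0 : S) : FinSets := ({s : S | s != s0} : finType).

Lemma sq_point (S : FinSets) (s0 : S) :
  is_pushout (vmap star) (vmap (Sm s0)) (pt s0) (fun x : Sm s0 => val x).
Proof.
split; first by apply: FS_eq => -[].
move=> Q u v _.
exists (fun s => match insub s with Some t => v t | None => u tt end); split.
  split; apply: FS_eq => x /=.
    by case: x; rewrite insubF // eqxx.
  by rewrite valK.
move=> h' H1 H2; apply: FS_eq => s /=.
case: insubP => [t _ <-|].
  exact: (ap H2 t).
rewrite negbK => /eqP ->; exact: (ap H1 tt).
Qed.

Lemma sq_compl (A B : FinSets) (f : Hom A B) (finj : injective f) :
  is_pushout (vmap (Bc f)) (vmap A) (fun x : Bc f => val x) f.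
Proof.
split; first by apply: FS_eq => -[].
move=> Q u v _.
exists (fun b => match decb (b \in codom f) with
  | left H => v (iinv H) | right H => u (exist _ b H) end); split.
  split; apply: FS_eq => x /=.
    destruct (decb _) as [H|H]; first by have := valP x; rewrite H.
    by congr u; apply: val_inj.
  destruct (decb _) as [H|H]; first by rewrite (iinv_f finj).
  by have := H; rewrite codom_f.
move=> h' H1 H2; apply: FS_eq => b /=.
destruct (decb _) as [H|H].
  by rewrite -(ap H2 (iinv H)) /= f_iinv.
exact: (ap H1 (exist _ b H)).
Qed.

Lemma empty_init (S : FinSets) : (S -> False) -> is_initial S.
Proof.
move=> He x; exists (fun s => False_rect _ (He s)) => g.
by apply: FS_eq => s; case: (He s).
Qed.

Lemma card_Sm (S : FinSets) (s0 : S) n : #|S| = n.+1 -> #|Sm s0| = n.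
Proof.
move=> H; rewrite /Sm card_sig.
exact: etrans (cardC1 s0) (congr1 predn H).
Qed.

Lemma Phi_coprod (D : PreCylCat) (Phi : Functor FinSets D) :
  is_FinSet_morphism Phi -> forall S : FinSets,
  @is_coproduct D (elts S) (fun _ => Phi star) (Phi S) (fun s => fmap Phi (pt s)).
Proof.
move=> [Hcof [Hweq [Hini Hpo]]] S.
have [n Hn] : exists n, #|S| = n by eexists.
elim: n S Hn => [|n IH] S Hn.
  have He : S -> False.
    by move=> s; have : 0 < #|S|; [apply/card_gt0P; exists s | rewrite Hn].
  apply: coprod_empty => //; apply: Hini; exact: empty_init.
have [s0 _] : exists s0 : S, s0 \in S by apply/card_gt0P; rewrite Hn.
apply: (@coprod_step D (Phi star) (elts S) (elts (Sm s0)) s0 (fun x => val x)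
  (Phi (Sm s0)) _ (Phi (void : finType)) _ (fmap Phi (vmap star))
  (fmap Phi (vmap (Sm s0))) (fmap Phi (pt s0)) (fmap Phi (fun x : Sm s0 => val x))).
- apply: Hini; exact: void_init.
- exact: IH (card_Sm s0 Hn).
- apply: Hpo; [exact: vmap_inj | exact: sq_point].
- by [].
- by move=> t; rewrite -fmap_comp.
- move=> s; case: (eqVneq s s0) => [->|ne]; [by left | right].
  by exists (exist _ s ne).
Qed.

Lemma full_faithful (D : PreCylCat) (Phi Psi : Functor FinSets D) :
  is_FinSet_morphism Phi -> is_FinSet_morphism Psi ->
  (forall u : Hom (Phi star) (Psi star),
      exists eta : forall S : FinSets, Hom (Phi S) (Psi S),
        is_natural eta /\ eta star = u) /\
  (forall eta eta' : forall S : FinSets, Hom (Phi S) (Psi S),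
      is_natural eta -> is_natural eta' -> eta star = eta' star -> eta = eta').
Proof.
move=> HPhi HPsi; split.
  move=> u.
  exists (fun S => copmap (@Phi_coprod D Phi HPhi S) (fun s => compm (fmap Psi (pt s)) u)).
  split.
    move=> a b f; apply: (coprod_ext (@Phi_coprod D Phi HPhi a)) => s.
    rewrite -!comp_assoc -fmap_comp.
    rewrite (copmap_spec (@Phi_coprod D Phi HPhi b) _ (f s)).
    rewrite (copmap_spec (@Phi_coprod D Phi HPhi a) _ s).
    by rewrite comp_assoc -fmap_comp.
  apply: (coprod_ext (@Phi_coprod D Phi HPhi star)) => s.
  rewrite (copmap_spec (@Phi_coprod D Phi HPhi star) _ s).
  have -> : pt s = idm (C:=FinSets) star by apply: FS_eq => -[]; case: s.
  by rewrite !fmap_id comp_id_l comp_id_r.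
move=> eta eta' H1 H2 E; apply: functional_extensionality_dep => S.
apply: (coprod_ext (@Phi_coprod D Phi HPhi S)) => s.
by rewrite H1 H2 E.
Qed.

Lemma exists_coprod (D : PreCylCat) (X : D) (S : FinSets) :
  exists P inj, @is_coproduct D (elts S) (fun _ => X) P inj.
Proof.
have [[Hiso [Hcomp [[z [Hz Hzc]] [Hpush Hpcof]]]] _] := pc_axioms D.
have [n Hn] : exists n, #|S| = n by eexists.
elim: n S Hn => [|n IH] S Hn.
  have He : S -> False.
    by move=> s; have : 0 < #|S|; [apply/card_gt0P; exists s | rewrite Hn].
  exists z, (fun s => False_rect _ (He s)); exact: coprod_empty.
have [s0 _] : exists s0 : S, s0 \in S by apply/card_gt0P; rewrite Hn.
have [Cc [inj' Hc]] := IH _ (card_Sm s0 Hn).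
have [zX _] := Hz X; have [zC _] := Hz Cc.
have [P [i [j Hp]]] := Hpush _ _ _ zX zC (Hzc _ _).
exists P, (fun s : S => match insub s with Some t => compm j (inj' t) | None => i end).
apply: (@coprod_step D X (elts S) (elts (Sm s0)) s0 (fun x => val x) Cc inj' z P zX zC i j)
  => //.
- by rewrite insubF // eqxx.
- by move=> t; rewrite valK.
- move=> s; case: (eqVneq s s0) => [->|ne]; [by left | right].
  by exists (exist _ s ne).
Qed.

Section Cop.
Variables (D : PreCylCat) (X : D).

Definition cpS (S : FinSets) := constructive_indefinite_description _ (exists_coprod X S).
Definition CP (S : FinSets) : D := proj1_sig (cpS S).
Definition cinjS (S : FinSets) := constructive_indefinite_description _ (proj2_sig (cpS S)).
Definition cinj (S : FinSets) : elts S -> Hom X (CP S) := proj1_sig (cinjS S).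
Arguments cinj : clear implicits.
Lemma cp_co (S : FinSets) : @is_coproduct D (elts S) (fun _ => X) (CP S) (cinj S).
Proof. exact: proj2_sig (cinjS S). Qed.

Definition cfmap (S T : FinSets) (f : Hom S T) : Hom (CP S) (CP T) :=
  copmap (@cp_co S) (fun s => cinj T (f s)).

Lemma cfmap_inj (S T : FinSets) (f : Hom S T) s : compm (cfmap f) (cinj S s) = cinj T (f s).
Proof. exact: (copmap_spec (@cp_co S)). Qed.

Lemma cfmap_id (S : FinSets) : cfmap (idm S) = idm (CP S).
Proof.
apply: (coprod_ext (@cp_co S)) => s; by rewrite cfmap_inj comp_id_l.
Qed.

Lemma cfmap_comp (a b c : FinSets) (f : Hom a b) (g : Hom b c) :
  cfmap (compm g f) = compm (cfmap g) (cfmap f).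
Proof.
apply: (coprod_ext (@cp_co a)) => s; by rewrite -comp_assoc !cfmap_inj.
Qed.

Definition CopF : Functor FinSets D := Build_Functor cfmap_id cfmap_comp.
End Cop.

Lemma coprod_morph (D : PreCylCat) (X : D) (Phi : Functor FinSets D)
  (inj : forall S : FinSets, elts S -> Hom X (Phi S)) :
  (forall S : FinSets, @is_coproduct D (elts S) (fun _ => X) (Phi S) (inj S)) ->
  (forall (S T : FinSets) (f : Hom S T) s, compm (fmap Phi f) (inj S s) = inj T (f s)) ->
  is_FinSet_morphism Phi.
Proof.
move=> HC HN.
have [[Hiso [Hcomp [[z [Hz Hzc]] [Hpush Hpcof]]]] [Hwiso _]] := pc_axioms D.
have Hini : forall z0 : FinSets, is_initial z0 -> is_initial (Phi z0).
  move=> z0 Hz0; have [k _] := Hz0 (void : finType).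
  have He : z0 -> False by move=> s; case: (k s).
  move=> Q; have [h [_ U]] := HC z0 Q (fun s => False_rect _ (He s)).
  by exists h => g; apply: U => s; case: (He s).
have Hpo : forall (A B C' P : FinSets) (f : Hom A B) (g : Hom A C') (i : Hom B P) (j : Hom C' P),
    FinSet_cof f -> is_pushout f g i j ->
    is_pushout (fmap Phi f) (fmap Phi g) (fmap Phi i) (fmap Phi j).
  move=> A B C' P f g i j Hf Hp; split.
    by rewrite -!fmap_comp (proj1 Hp).
  move=> Q U V E.
  pose u := fun b => compm U (inj B b); pose v := fun c => compm V (inj C' c).
  have Huv : forall a, u (f a) = v (g a).
    by move=> a; rewrite /u /v -!HN !comp_assoc E.
  have Hw : forall p, exists m : Hom X Q,
      (forall b, i b = p -> m = u b) /\ (forall c, j c = p -> m = v c).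
    move=> p; case: (po_JS Hp p) => [[b <-]|[c <-]].
      exists (u b); split.
        move=> b' /(po_K1 Hf Hp) [->//|[a1 [a2 [-> [-> Eg]]]]].
        by rewrite !Huv Eg.
      by move=> c /esym /(po_K2 Hf Hp) [a [-> ->]]; rewrite Huv.
    exists (v c); split.
      by move=> b /(po_K2 Hf Hp) [a [-> ->]]; rewrite Huv.
    by move=> c' /(po_jinj Hf Hp) ->.
  pose w p := proj1_sig (constructive_indefinite_description _ (Hw p)).
  have Hwi : forall b, w (i b) = u b.
    move=> b; rewrite /w; case: (constructive_indefinite_description _ _) => m [H1 _] /=.
    exact: H1.
  have Hwj : forall c, w (j c) = v c.
    move=> c; rewrite /w; case: (constructive_indefinite_description _ _) => m [_ H2] /=.
    exact: H2.
  have [h [Hh Hu]] := HC P Q w.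
  exists h; split.
    split.
      by apply: (coprod_ext (HC B)) => b; rewrite -comp_assoc HN Hh Hwi.
    by apply: (coprod_ext (HC C')) => c; rewrite -comp_assoc HN Hh Hwj.
  move=> h' H1 H2; apply: Hu => p; case: (po_JS Hp p) => [[b <-]|[c <-]].
    by rewrite Hwi -HN comp_assoc H1.
  by rewrite Hwj -HN comp_assoc H2.
split; last split; last split => //.
- move=> A B f Hf.
  have Hp := Hpo _ _ _ _ _ _ _ _ (@vmap_inj (Bc f)) (sq_compl Hf).
  apply: Hpcof Hp.
  have Hv := Hini _ void_init.
  have [k _] := Hz (Phi (void : finType)); have [k' _] := Hv z.
  have [m _] := Hz (Phi (Bc f)).
  have -> : fmap Phi (vmap (Bc f)) = compm m k' by exact: (@init_uniq D _ Hv _ _ _).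
  apply: Hcomp; last exact: Hzc.
  apply: Hiso; exists k; split; [exact: (@init_uniq D _ Hv _ _ _) | exact: (@init_uniq D _ Hz _ _ _)].
- move=> a b f [g0 Hgf Hfg]; pose g : Hom (C:=FinSets) b a := g0.
  apply: Hwiso; exists (fmap Phi g); split.
    rewrite -fmap_comp (_ : compm g f = idm a) ?fmap_id //.
    by apply: FS_eq => x; exact: Hgf.
  rewrite -fmap_comp (_ : compm f g = idm b) ?fmap_id //.
  by apply: FS_eq => x; exact: Hfg.
Qed.

Theorem mainTheorem11 :
  is_precylinder_category FinSet_cof FinSet_weq /\
  forall D : PreCylCat,
    (forall Phi Psi : Functor FinSets D,
        is_FinSet_morphism Phi -> is_FinSet_morphism Psi ->
        (forall u : Hom (Phi star) (Psi star),
            exists eta : forall S : FinSets, Hom (Phi S) (Psi S),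
              is_natural eta /\ eta star = u) /\
        (forall eta eta' : forall S : FinSets, Hom (Phi S) (Psi S),
            is_natural eta -> is_natural eta' -> eta star = eta' star ->
            eta = eta')) /\
    (forall X : D,
        exists (Phi : Functor FinSets D) (e : Hom X (Phi star)),
          is_FinSet_morphism Phi /\ is_iso e /\
          forall S : FinSets,
            @is_coproduct D (elts S) (fun _ : elts S => X) (Phi S)
                         (fun s : elts S => compm (fmap Phi (pt s)) e)).
Proof.
split; first exact: FS_precyl.
move=> D; split; first by move=> Phi Psi; exact: full_faithful.
move=> X; exists (CopF X), (cinj X (tt : elts star)); split.
  apply: (@coprod_morph D X (CopF X) (cinj X)); first by move=> S; exact: cp_co.
  by move=> S T f s; exact: cfmap_inj.
split.
  exists (copmap (@cp_co D X star) (fun _ => idm X)); split.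
    exact: (copmap_spec (@cp_co D X star) _ tt).
  apply: (coprod_ext (@cp_co D X star)) => -[].
  by rewrite -comp_assoc (copmap_spec (@cp_co D X star) _ tt) comp_id_r comp_id_l.
move=> S; apply: coprod_eq (@cp_co D X S) => s.
by rewrite /= cfmap_inj.
Qed.
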